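(* Let $(V,L,\varphi,E)$ be a valuation system such that $\varphi$ is $\Pi$-extendible. Then the valuation system $(V,\Pi L,\Pi\varphi,E)$ is $\Pi$-complete.
   Context: A valuation system $(V,L,\varphi,E)$ consists of: (i) a lattice $V$ which is $\sigma$-distributive, i.e. for every $a\in V$ and every sequence $(b_n)$ in $V$ whose infimum exists, $\bigwedge_n(a\vee b_n)$ exists and equals $a\vee\bigwedge_n b_n$, and dually for suprema; (ii) a sublattice $L$ of $V$; (iii) a partially ordered abelian group $E$ which is R-complete: whenever $x_1\ge x_2\ge\cdots$ and $y_1\ge y_2\ge\cdots$ in $E$ are such that $\bigwedge_n(x_n+y_n)$ exists, then $\bigwedge_n x_n$ and $\bigwedge_n y_n$ exist, and dually for increasing sequences and suprema; (iv) a valuation $\varphi:L\to E$, i.e. an order-preserving map with $\varphi(a\wedge b)+\varphi(a\vee b)=\varphi(a)+\varphi(b)$. A decreasing sequence $a_1\ge a_2\ge\cdots$ in $L$ is $\varphi$-convergent if $\bigwedge_n a_n$ exists in $V$ and $\bigwedge_n\varphi(a_n)$ exists in $E$. The system is $\Pi$-complete if for every $\varphi$-convergent decreasing sequence $(a_n)$ in $L$ we have $\bigwedge_n a_n\in L$ and $\varphi(\bigwedge_n a_n)=\bigwedge_n\varphi(a_n)$. Let $\Pi L:=\{\bigwedge_n a_n: (a_n)\text{ a }\varphi\text{-convergent decreasing sequence in }L\}$; this is a sublattice of $V$ containing $L$. $\varphi$ is $\Pi$-extendible if there is a valuation $\psi:\Pi L\to E$ with $\psi(\bigwedge_n a_n)=\bigwedge_n\varphi(a_n)$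 for every $\varphi$-convergent decreasing sequence $(a_n)$ in $L$; this $\psi$ is then unique and denoted $\Pi\varphi$. *)

(* Defs.v *)
From HB Require Import structures.
From mathcomp Require Import all_boot all_order all_algebra.
Unset Printing Implicit Defensive.
Import Order.TTheory GRing.Theory Num.Theory.
Local Open Scope order_scope.

Section Bounds.
Context {d : Order.disp_t} {T : porderType d}.

Definition is_inf (x : nat -> T) (m : T) : Prop :=
  (forall n, m <= x n) /\ (forall l, (forall n, l <= x n) -> l <= m).
Definition is_sup (x : nat -> T) (m : T) : Prop :=
  (forall n, x n <= m) /\ (forall u, (forall n, x n <= u) -> m <= u).
Definition has_inf (x : nat -> T) : Prop := exists m, is_inf x m.
Definition has_sup (x : nat -> T) : Prop := exists m, is_sup x m.
Definition decreasing (x : nat -> T) : Prop := forall n, x n.+1 <= x n.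
Definition increasing (x : nat -> T) : Prop := forall n, x n <= x n.+1.
End Bounds.

Definition sigma_distributive {d : Order.disp_t} (V : latticeType d) : Prop :=
  (forall (a : V) (b : nat -> V) (m : V), is_inf b m ->
      is_inf (fun n => a `|` b n) (a `|` m)) /\
  (forall (a : V) (b : nat -> V) (m : V), is_sup b m ->
      is_sup (fun n => a `&` b n) (a `&` m)).

Definition sublattice {d : Order.disp_t} {V : latticeType d} (L : V -> Prop) : Prop :=
  forall a b, L a -> L b -> L (a `&` b) /\ L (a `|` b).

Definition po_group (E : porderZmodType) : Prop :=
  forall x y z : E, (x <= y)%R -> (x + z <= y + z)%R.

Definition R_complete (E : porderZmodType) : Prop :=
  (forall x y : nat -> E, decreasing x -> decreasing y ->
     has_inf (fun n => x n + y n)%R -> has_inf x /\ has_inf y) /\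
  (forall x y : nat -> E, increasing x -> increasing y ->
     has_sup (fun n => x n + y n)%R -> has_sup x /\ has_sup y).

(* ---------- valuations on a sublattice (given as total maps, only their
   values on L matter) ---------- *)
Definition valuation {d : Order.disp_t} {V : latticeType d} {E : porderZmodType}
    (L : V -> Prop) (phi : V -> E) : Prop :=
  (forall a b, L a -> L b -> a <= b -> (phi a <= phi b)%R) /\
  (forall a b, L a -> L b -> (phi (a `&` b) + phi (a `|` b) = phi a + phi b)%R).

Definition valuation_system {d : Order.disp_t} (V : latticeType d) (L : V -> Prop)
    (E : porderZmodType) (phi : V -> E) : Prop :=
  sigma_distributive V /\ sublattice L /\ po_group E /\ R_complete E /\
  valuation L phi.

Definition seq_in {d : Order.disp_t} {V : latticeType d} (L : V -> Prop)
    (a : nat -> V) : Prop := forall n, L (a n).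

Definition phi_conv_decr {d : Order.disp_t} {V : latticeType d} {E : porderZmodType}
    (L : V -> Prop) (phi : V -> E) (a : nat -> V) : Prop :=
  seq_in L a /\ decreasing a /\ has_inf a /\ has_inf (fun n => phi (a n)).

Definition Pi_complete {d : Order.disp_t} {V : latticeType d} {E : porderZmodType}
    (L : V -> Prop) (phi : V -> E) : Prop :=
  forall a : nat -> V, phi_conv_decr L phi a ->
    forall m : V, is_inf a m ->
      L m /\ is_inf (fun n => phi (a n)) (phi m).

Definition PiL {d : Order.disp_t} {V : latticeType d} {E : porderZmodType}
    (L : V -> Prop) (phi : V -> E) : V -> Prop :=
  fun x => exists a : nat -> V, phi_conv_decr L phi a /\ is_inf a x.

Definition is_Pi_extension {d : Order.disp_t} {V : latticeType d} {E : porderZmodType}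
    (L : V -> Prop) (phi psi : V -> E) : Prop :=
  valuation (PiL L phi) psi /\
  forall a : nat -> V, phi_conv_decr L phi a ->
    forall m : V, is_inf a m -> is_inf (fun n => phi (a n)) (psi m).

Definition Pi_extendible {d : Order.disp_t} {V : latticeType d} {E : porderZmodType}
    (L : V -> Prop) (phi : V -> E) : Prop :=
  exists psi : V -> E, is_Pi_extension L phi psi.

(* Main.v *)
Require Import Defs.
From HB Require Import structures.
From mathcomp Require Import all_boot all_order all_algebra.
From Stdlib Require Import IndefiniteDescription FunctionalExtensionality.
Import Order.TTheory GRing.Theory.
Local Open Scope order_scope.

Section Helpers.

Lemma decr_le {d} {T : porderType d} {a : nat -> T} :
  decreasing a -> forall {m n}, (m <= n)%N -> a n <= a m.
Proof.
move=> Ha m n /subnK <-; elim: (n - m)%N => [|k IH] //=.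
rewrite addSn; exact: le_trans (Ha _) IH.
Qed.

Lemma inf_unique {d} {T : porderType d} {x : nat -> T} {m1 m2} :
  is_inf x m1 -> is_inf x m2 -> m1 = m2.
Proof.
move=> [h1 l1] [h2 l2]; apply/le_anti/andP; split; [exact: l2 | exact: l1].
Qed.

Lemma inf_const {d} {T : porderType d} (x : T) : is_inf (fun _ => x) x.
Proof. split; first by move=> n. by move=> l; apply; exact: 0%N. Qed.

Lemma diag_lb {d} {T : porderType d} {g : nat -> nat -> T} {l : T} :
  (forall N k, (N <= k)%N -> g k k <= g N k) ->
  (forall N k, (k <= N)%N -> g N N <= g N k) ->
  (forall k, l <= g k k) -> forall N k, l <= g N k.
Proof.
move=> H1 H2 Hl N k; case: (leqP N k) => h.
  exact: le_trans (Hl k) (H1 _ _ h).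
exact: le_trans (Hl N) (H2 _ _ (ltnW h)).
Qed.

Lemma inf_meet {d} {V : latticeType d} {a b : nat -> V} {x y} :
  is_inf a x -> is_inf b y -> is_inf (fun n => a n `&` b n) (x `&` y).
Proof.
move=> [ha la] [hb lb]; split => [n|l Hl]; first exact: leI2.
rewrite lexI; apply/andP; split.
  apply: la => n; exact: le_trans (Hl n) (leIl _ _).
apply: lb => n; exact: le_trans (Hl n) (leIr _ _).
Qed.

Lemma inf_join {d} {V : latticeType d} {a b : nat -> V} {x y} :
  sigma_distributive V -> decreasing a -> decreasing b ->
  is_inf a x -> is_inf b y -> is_inf (fun n => a n `|` b n) (x `|` y).
Proof.
move=> [sd _] da db [ha la] [hb lb]; split => [n|l Hl]; first exact: leU2.
have H1 : forall k, l <= a k `|` y.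
  move=> k; have [_ lk] := sd (a k) b y (conj hb lb); apply: lk => n.
  case: (leqP k n) => h.
    exact: le_trans (Hl n) (leU2 (decr_le da h) (lexx _)).
  exact: le_trans (Hl k) (leU2 (lexx _) (decr_le db (ltnW h))).
have [_ lk] := sd y a x (conj ha la).
rewrite joinC; apply: lk => n; rewrite joinC; exact: H1.
Qed.

Lemma leD (E : porderZmodType) : po_group E ->
  forall a b c e : E, a <= b -> c <= e -> (a + c <= b + e)%R.
Proof.
move=> pg a b c e h1 h2; apply: le_trans (pg _ _ c h1) _.
rewrite (addrC b) (addrC b); exact: pg.
Qed.

Lemma inf_sum (E : porderZmodType) (x y : nat -> E) al be :
  po_group E -> decreasing x -> decreasing y -> is_inf x al -> is_inf y be ->
  is_inf (fun n => x n + y n)%R (al + be)%R.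
Proof.
move=> pg dx dy [hx lx] [hy ly]; split => [n|l Hl]; first exact: leD.
have H1 : forall m, (l - x m <= be)%R.
  move=> m; apply: ly => n.
  have h : (l <= x m + y n)%R.
    apply: le_trans (Hl (maxn m n)) _; apply: leD => //; apply: decr_le => //.
    - exact: leq_maxl.
    - exact: leq_maxr.
  have := pg _ _ (- x m)%R h; by rewrite (addrC (x m)) addrK.
have H2 : forall m, (l - be <= x m)%R.
  move=> m; have := pg _ _ (x m - be)%R (H1 m).
  by rewrite addrA subrK (addrC be) subrK.
have := pg _ _ be (lx _ H2); by rewrite subrK.
Qed.

Lemma conv_meet_join {d} {V : latticeType d} {L : V -> Prop} {E : porderZmodType}
  {phi : V -> E} {a b : nat -> V} :
  valuation_system V L E phi -> phi_conv_decr L phi a -> phi_conv_decr L phi b ->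
  phi_conv_decr L phi (fun n => a n `&` b n) /\ phi_conv_decr L phi (fun n => a n `|` b n).
Proof.
move=> [sd [sl [pg [rc [mon md]]]]] [ia [da [[x hx] [al hal]]]] [ib [db [[y hy] [be hbe]]]].
have dm : decreasing (fun n => a n `&` b n) by move=> n; exact: leI2.
have dj : decreasing (fun n => a n `|` b n) by move=> n; exact: leU2.
have im : seq_in L (fun n => a n `&` b n) by move=> n; case: (sl _ _ (ia n) (ib n)).
have ij : seq_in L (fun n => a n `|` b n) by move=> n; case: (sl _ _ (ia n) (ib n)).
have dpa : decreasing (fun n => phi (a n)) by move=> n; apply: mon.
have dpb : decreasing (fun n => phi (b n)) by move=> n; apply: mon.
have hs := @inf_sum E _ _ _ _ pg dpa dpb hal hbe.
have [h1 h2] : has_inf (fun n => phi (a n `&` b n)) /\ has_inf (fun n => phi (a n `|` b n)).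
  apply: (rc.1) => [n|n|]; first by apply: mon.
    by apply: mon.
  exists (al + be)%R.
  have -> : (fun n => phi (a n `&` b n) + phi (a n `|` b n))%R = (fun n => phi (a n) + phi (b n))%R.
    by apply: functional_extensionality => n; apply: md.
  exact: hs.
split; split => //; split => //; split => //.
  by exists (x `&` y); apply: inf_meet.
by exists (x `|` y); apply: inf_join.
Qed.

Fixpoint Dm {d} {V : latticeType d} (A : nat -> nat -> V) (N k : nat) : V :=
  match N with 0 => A 0 k | N'.+1 => Dm A N' k `&` A N'.+1 k end.

End Helpers.

Theorem lemma5p4 (d : Order.disp_t) (V : latticeType d) (L : V -> Prop)
    (E : porderZmodType) (phi : V -> E) :
  valuation_system V L E phi ->
  Pi_extendible L phi ->
  forall psi : V -> E, is_Pi_extension L phi psi ->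
    valuation_system V (PiL L phi) E psi /\ Pi_complete (PiL L phi) psi.
Proof.
move=> VS _ psi [valpsi ext].
have VS' := VS; move: VS' => [sd [sl [pg [rc [mon md]]]]].
have constc : forall x, L x -> phi_conv_decr L phi (fun _ => x).
  move=> x Lx; split => //; split => //; split; [exists x | exists (phi x)]; exact: inf_const.
have LPi : forall x, L x -> PiL L phi x.
  move=> x Lx; exists (fun _ => x); split; [exact: constc | exact: inf_const].
have psiL : forall x, L x -> psi x = phi x.
  move=> x Lx; apply: inf_unique (ext _ (constc x Lx) x (inf_const x)) (inf_const _).
split.
  split => //; split; last by split.
  move=> x y [a [ca ia]] [b [cb ib]].
  have [cm cj] := conv_meet_join VS ca cb.
  split; [exists (fun n => a n `&` b n) | exists (fun n => a n `|` b n)]; split => //.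
    exact: inf_meet.
  by apply: inf_join => //; [exact: ca.2.1 | exact: cb.2.1].
move=> c [cin [cdec [_ [ga hga]]]] m minf.
pose P n (a : nat -> V) := phi_conv_decr L phi a /\ is_inf a (c n).
pose A n := proj1_sig (constructive_indefinite_description (P n) (cin n)).
have HA : forall n, P n (A n) := fun n => proj2_sig (constructive_indefinite_description (P n) (cin n)).
have C1 : forall N, phi_conv_decr L phi (Dm A N) /\ is_inf (Dm A N) (c N).
  elim => [|N [IHc IHi]]; first exact: HA.
  have [c2 i2] := HA N.+1.
  split; first exact: (conv_meet_join VS IHc c2).1.
  have := inf_meet IHi i2; by rewrite meet_r.
have C2 : forall k N N', (N <= N')%N -> Dm A N' k <= Dm A N k.
  move=> k; apply: decr_le => N /=; exact: leIl.
have Dd : forall N, decreasing (Dm A N) := fun N => (C1 N).1.2.1.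
have DL : forall N k, L (Dm A N k) := fun N => (C1 N).1.1.
pose b k := Dm A k k.
have bd : decreasing b.
  move=> k; rewrite /b; apply: le_trans (C2 _ _ _ (leqnSn k)) (Dd k k).
have bi : is_inf b m.
  split => [k|l Hl].
    apply: le_trans (minf.1 k) _; exact: ((C1 k).2.1 k).
  apply: minf.2 => N; apply: (C1 N).2.2 => k.
  apply: (diag_lb (g := Dm A)) => // [N' k' h|N' k' h]; first exact: C2.
  exact: decr_le.
have bpi : is_inf (fun k => phi (b k)) ga.
  split => [k|l Hl].
    apply: le_trans (hga.1 k) _; rewrite -psiL; last exact: DL.
    apply: valpsi.1; [exact: cin | exact: LPi (DL _ _) | exact: ((C1 k).2.1 k)].
  apply: hga.2 => N.
  have := ext _ (C1 N).1 _ (C1 N).2 => -[_ lN]; apply: lN => k.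
  apply: (diag_lb (g := fun N k => phi (Dm A N k))) => // [N' k' h|N' k' h].
    by apply: mon; [exact: DL | exact: DL | exact: C2].
  by apply: mon; [exact: DL | exact: DL | exact: decr_le].
have bc : phi_conv_decr L phi b.
  split; first by move=> k; exact: DL.
  split => //; split; [by exists m | by exists ga].
split; first by exists b.
have -> : psi m = ga := inf_unique (ext _ bc _ bi) bpi.
exact: hga.
Qed.
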